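(* Let $A(x)=\sin^2(2\pi x)$, $\hat m(A)=\frac{A(1/3)+A(2/3)}{2}$, $\eta(x)=\frac{x}{4}+\frac12$, $F(x)=A(\frac{x}{2})+A(\frac{x}{4}+\frac12)$, and $V_2(x)=\lim_{n\to\infty}\sum_{i=0}^{n-1}[F(\eta^i(x))-2\hat m(A)]$ for $x\in[0,1]$. Then the function $V_1(x)=V_2\left(\frac{x+1}{2}\right)+A\left(\frac{x+1}{2}\right)-\hat m(A)$ satisfies, for all $x\in[0,1]$, $$V_1(x/2)+A(x/2)=V_2(x)+\hat m(A).$$
   Context: $\eta^i$ denotes the $i$-th iterate of $\eta$, with $\eta^0$ the identity. *)

(* Defs.v *)
From Stdlib Require Import Reals.
From Coquelicot Require Import Coquelicot.
Open Scope R_scope.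

Definition A (x : R) : R := (sin (2 * PI * x)) ^ 2.

Definition mhat : R := (A (1/3) + A (2/3)) / 2.

Definition eta (x : R) : R := x / 4 + 1 / 2.

Definition eta_iter (i : nat) (x : R) : R := Nat.iter i eta x.

Definition F (x : R) : R := A (x / 2) + A (x / 4 + 1 / 2).

Fixpoint psum (x : R) (n : nat) : R :=
  match n with
  | O => 0
  | S k => psum x k + (F (eta_iter k x) - 2 * mhat)
  end.

Definition V2 (x : R) : R := real (Lim_seq (psum x)).

Definition V1 (x : R) : R := V2 ((x + 1) / 2) + A ((x + 1) / 2) - mhat.

(* Main.v *)
Require Import Defs.
From Stdlib Require Import Reals Lra.
From Coquelicot Require Import Coquelicot.
Open Scope R_scope.

Lemma abs_sin_le (t : R) : Rabs (sin t) <= Rabs t.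
Proof.
  destruct (Rtotal_order t 0) as [H|[H|H]].
  - assert (H1 := sin_gt_x t H).
    assert (H2 := SIN_bound t).
    destruct (Rle_lt_dec t (-1)).
    + rewrite (Rabs_left t H). apply Rabs_le; lra.
    + assert (sin t < 0) by (apply sin_lt_0_var; [assert (3 < PI) by (pose proof PI2_3_2; lra); lra | lra]).
      rewrite (Rabs_left t H), (Rabs_left _ H0); lra.
  - subst; rewrite sin_0; lra.
  - assert (H1 := sin_lt_x t H).
    assert (H2 := SIN_bound t).
    destruct (Rle_lt_dec 1 t).
    + rewrite (Rabs_right t) by lra. apply Rabs_le; lra.
    + assert (0 < sin t) by (apply sin_gt_0; [lra | pose proof PI2_3_2 ; lra]).
      rewrite (Rabs_right t), (Rabs_right (sin t)); lra.
Qed.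

Lemma sin_lip (a b : R) : Rabs (sin a - sin b) <= Rabs (a - b).
Proof.
  rewrite form4, !Rabs_mult.
  pose proof (abs_sin_le ((a - b) / 2)).
  assert (Rabs (cos ((a+b)/2)) <= 1) by (apply Rabs_le; apply COS_bound).
  assert (Rabs ((a-b)/2) = Rabs (a-b) / 2).
  { unfold Rdiv. rewrite Rabs_mult, (Rabs_right (/2)); lra. }
  rewrite Rabs_right by lra.
  pose proof (Rabs_pos (sin ((a - b) / 2))).
  pose proof (Rabs_pos (cos ((a + b) / 2))).
  nra.
Qed.

Lemma A_lip (u v : R) : Rabs (A u - A v) <= 4 * PI * Rabs (u - v).
Proof.
  unfold A.
  replace (sin (2 * PI * u) ^ 2 - sin (2 * PI * v) ^ 2) with
    ((sin (2 * PI * u) + sin (2 * PI * v)) * (sin (2 * PI * u) - sin (2 * PI * v))) by ring.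
  rewrite Rabs_mult.
  pose proof (sin_lip (2 * PI * u) (2 * PI * v)).
  replace (2 * PI * u - 2 * PI * v) with ((2 * PI) * (u - v)) in H by ring.
  rewrite Rabs_mult, (Rabs_right (2 * PI)) in H by (pose proof PI_RGT_0; lra).
  assert (Rabs (sin (2 * PI * u) + sin (2 * PI * v)) <= 2).
  { eapply Rle_trans; [apply Rabs_triang|].
    pose proof (SIN_bound (2*PI*u)); pose proof (SIN_bound (2*PI*v)).
    assert (Rabs (sin (2 * PI * u)) <= 1) by (apply Rabs_le; lra).
    assert (Rabs (sin (2 * PI * v)) <= 1) by (apply Rabs_le; lra). lra. }
  pose proof (Rabs_pos (sin (2 * PI * u) - sin (2 * PI * v))).
  pose proof (Rabs_pos (sin (2 * PI * u) + sin (2 * PI * v))).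
  nra.
Qed.

Lemma F_bound (y : R) : Rabs (F y - 2 * mhat) <= 3 * PI * Rabs (y - 2/3).
Proof.
  unfold F, mhat.
  replace (A (y / 2) + A (y / 4 + 1 / 2) - 2 * ((A (1 / 3) + A (2 / 3)) / 2)) with
    ((A (y/2) - A (1/3)) + (A (y / 4 + 1 / 2) - A (2/3))) by field.
  eapply Rle_trans; [apply Rabs_triang|].
  pose proof (A_lip (y/2) (1/3)). pose proof (A_lip (y / 4 + 1 / 2) (2/3)).
  replace (y/2 - 1/3) with ((y - 2/3) * (1/2)) in H by field.
  replace (y / 4 + 1 / 2 - 2/3) with ((y - 2/3) * (1/4)) in H0 by field.
  rewrite Rabs_mult, (Rabs_right (1/2)) in H by lra.
  rewrite Rabs_mult, (Rabs_right (1/4)) in H0 by lra.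
  lra.
Qed.

Lemma eta_iter_dist (k : nat) (y : R) : eta_iter k y - 2/3 = (y - 2/3) * (1/4)^k.
Proof.
  induction k; unfold eta_iter in *; simpl.
  - ring.
  - unfold eta at 1. replace (Nat.iter k eta y) with ((y - 2/3) * (1/4)^k + 2/3) by lra. field.
Qed.

Lemma eta_iter_S (k : nat) (y : R) : eta_iter (S k) y = eta_iter k (eta y).
Proof.
  unfold eta_iter. induction k; simpl in *; auto. rewrite <- IHk. reflexivity.
Qed.

Lemma psum_S (n : nat) (y : R) : psum y (S n) = (F y - 2 * mhat) + psum (eta y) n.
Proof.
  induction n.
  - simpl. unfold eta_iter; simpl. ring.
  - change (psum y (S (S n))) with (psum y (S n) + (F (eta_iter (S n) y) - 2 * mhat)).
    rewrite IHn, eta_iter_S. simpl. ring.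
Qed.

Lemma psum_sum (n : nat) (y : R) :
  psum y (S n) = sum_n (fun k => F (eta_iter k y) - 2 * mhat) n.
Proof.
  induction n.
  - rewrite sum_O. simpl. ring.
  - rewrite sum_Sn, <- IHn. simpl. reflexivity.
Qed.

Lemma psum_cv (y : R) : exists l : R, is_lim_seq (psum y) l.
Proof.
  assert (ex_series (fun k => F (eta_iter k y) - 2 * mhat)).
  { apply (@ex_series_le R_AbsRing R_CompleteNormedModule _ (fun k => scal (3 * PI * Rabs (y - 2/3)) ((1/4)^k))).
    - intros k. unfold scal; simpl; unfold mult; simpl.
      change norm with Rabs; simpl.
      eapply Rle_trans; [apply F_bound|].
      rewrite eta_iter_dist, Rabs_mult, (Rabs_right ((1/4)^k)).
      + lra.
      + apply Rle_ge, pow_le; lra.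
    - apply (@ex_series_scal_l R_AbsRing R_NormedModule), ex_series_geom. rewrite Rabs_right; lra. }
  destruct H as [l Hl]. exists l.
  apply is_lim_seq_incr_1.
  eapply is_lim_seq_ext; [intros n; symmetry; apply psum_sum|].
  exact Hl.
Qed.

Theorem mainTheorem9 (x : R) (hx0 : 0 <= x) (hx1 : x <= 1) :
  V1 (x / 2) + A (x / 2) = V2 x + mhat.
Proof.
  unfold V1.
  replace ((x / 2 + 1) / 2) with (eta x) by (unfold eta; field).
  destruct (psum_cv x) as [l1 H1].
  destruct (psum_cv (eta x)) as [l2 H2].
  unfold V2. rewrite (is_lim_seq_unique _ _ H1), (is_lim_seq_unique _ _ H2). simpl.
  assert (is_lim_seq (psum x) ((F x - 2 * mhat) + l2)).
  { apply is_lim_seq_incr_1.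
    eapply is_lim_seq_ext; [intros n; symmetry; apply psum_S|].
    apply (is_lim_seq_plus' (fun _ => F x - 2 * mhat) (psum (eta x))); auto.
    apply is_lim_seq_const. }
  assert (l1 = (F x - 2 * mhat) + l2).
  { apply (is_lim_seq_unique _ _) in H1. apply (is_lim_seq_unique _ _) in H.
    rewrite H1 in H. injection H; auto. }
  rewrite H0. unfold F. replace (x / 4 + 1 / 2) with (eta x) by reflexivity. ring.
Qed.
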